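(* Let $\mathcal{C}$ be a class of instances and let $K\in\{\mathbb{B},\mathbb{N}\}$. Then $\mathcal{C}$ admits a left query algorithm over $K$ if and only if $\mathcal{C}$ admits a left query algorithm $(\mathcal{F},X)$ over $K$ in which every instance in $\mathcal{F}$ is connected.
   Context: A schema is a finite set of relation symbols, each with a positive arity. An instance $A$ over a schema $\sigma$ assigns to each $R\in\sigma$ of arity $r$ a finite $r$-ary relation $R^A$; its facts are the tuples in these relations, and $\mathrm{adom}(A)$ is the set of elements occurring in its facts. A homomorphism $h:A\to B$ is a map $h:\mathrm{adom}(A)\to\mathrm{adom}(B)$ such that $(a_1,\dots,a_r)\in R^A$ implies $(h(a_1),\dots,h(a_r))\in R^B$ for every $R\in\sigma$; we write $A\to B$ if one exists. A class of instances is a collection of instances over a fixed schema that is closed under isomorphism. $\mathbb{N}$ is the semiring of non-negative integers and $\mathbb{B}$ the Boolean semiring on $\{0,1\}$. $\hom_{\mathbb{N}}(A,B)$ is the number of homomorphisms from $A$ to $B$; $\hom_{\mathbb{B}}(A,B)=1$ if $A\to B$ and $0$ otherwise. For a finite set $\mathcal{F}=\{F_1,\dots,F_k\}$ of instances, $\hom_K(\mathcal{F},A)=(\hom_K(F_1,A),\dots,\hom_K(F_k,A))$ and $\hom_K(A,\mathcal{F})=(\hom_K(A,F_1),\dots,\hom_K(A,F_k))$. A left $k$-query algorithm over $K$ for $\mathcal{C}$ is a pair $(\mathcal{F},X)$ with $\mathcal{F}$ a set of $k$ instances and $X$ a set of $k$-tuples over $K$ (no effectiveness required) such that for every instance $D$: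 $D\in\mathcal{C}$ iff $\hom_K(\mathcal{F},D)\in X$. A right $k$-query algorithm is defined the same way using $\hom_K(D,\mathcal{F})$. $\mathcal{C}$ admits a left (right) query algorithm over $K$ if it has a left (right) $k$-query algorithm over $K$ for some $k>0$. The incidence multigraph of $A$ is the bipartite multigraph with parts $\mathrm{adom}(A)$ and $\{(R,t): R\in\sigma, t\in R^A\}$, with an edge $(a,(R,t))$ for each occurrence of $a$ as an entry of $t$. A path in $A$ is a sequence $a_0,\dots,a_n$ of elements such that there are $b_1,\dots,b_n$ with $a_0,b_1,a_1,\dots,b_n,a_n$ a path in the incidence multigraph (not traversing an edge twice in succession in opposite directions); $A$ is connected if any two elements of $\mathrm{adom}(A)$ are joined by a path. *)

(* Defs.v *)
From mathcomp Require Import all_boot.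
From Stdlib Require List.
Set Implicit Arguments. Unset Strict Implicit. Unset Printing Implicit Defensive.

(* An instance over (S, ar): for each symbol R a finite ar R-ary relation
   over the element universe nat, given as a finite list of tuples
   (the relation is the set of listed tuples). *)
Definition instance (S : finType) (ar : S -> nat) :=
  forall R : S, seq ((ar R).-tuple nat).

Section Inst.
Variables (S : finType) (ar : S -> nat).

(* active domain (as a list, possibly with repetitions) *)
Definition adom (A : instance ar) : seq nat :=
  flatten [seq flatten [seq val t | t <- A R] | R <- enum S].

Definition is_homb (A B : instance ar) (h : nat -> nat) : bool :=
  [forall R : S, all (fun t => map_tuple h t \in B R) (A R)].

(* maps adom A -> adom B, encoded via the duplicate-free lists of the
   active domains *)
Definition hom_of (dA dB : seq nat)
  (g : {ffun 'I_(size dA) -> 'I_(size dB)}) (x : nat) : nat :=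
  if (insub (index x dA) : option 'I_(size dA)) is Some i
  then nth 0 dB (g i) else x.

Definition hom_count (A B : instance ar) : nat :=
  #|[pred g : {ffun 'I_(size (undup (adom A))) -> 'I_(size (undup (adom B)))}
       | is_homb A B (hom_of g)]|.

Inductive semiring := SB | SN.

(* hom_K(A,B); Boolean values 0/1 are encoded as the naturals 0/1 *)
Definition homK (K : semiring) (A B : instance ar) : nat :=
  match K with
  | SB => (0 < hom_count A B)
  | SN => hom_count A B
  end.

Definition isomorphic (A B : instance ar) : Prop :=
  exists f g : nat -> nat,
    is_homb A B f /\ is_homb B A g /\
    {in adom A, cancel f g} /\ {in adom B, cancel g f}.

Definition iso_closed (C : instance ar -> Prop) : Prop :=
  forall A B, isomorphic A B -> C A -> C B.

(* connectivity via paths in the incidence multigraph: consecutive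
   elements a_{i-1}, a_i occur in a common fact b_i *)
Definition cooccur (A : instance ar) (x y : nat) : Prop :=
  exists R : S, exists t, t \in A R /\ x \in val t /\ y \in val t.

Inductive linked (A : instance ar) : nat -> nat -> Prop :=
  | linked0 a : linked A a a
  | linkedS a b c : cooccur A a b -> linked A b c -> linked A a c.

Definition connected (A : instance ar) : Prop :=
  forall a b, a \in adom A -> b \in adom A -> linked A a b.

Definition left_query_alg (K : semiring) (C : instance ar -> Prop)
  (F : seq (instance ar)) (X : seq nat -> Prop) : Prop :=
  forall D : instance ar, C D <-> X [seq homK K A D | A <- F].

Definition admits_left (K : semiring) (C : instance ar -> Prop) : Prop :=
  exists (F : seq (instance ar)) (X : seq nat -> Prop),
    0 < size F /\ left_query_alg K C F X.

Definition admits_left_connected (K : semiring) (C : instance ar -> Prop) : Prop :=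
  exists (F : seq (instance ar)) (X : seq nat -> Prop),
    0 < size F /\ (forall A, List.In A F -> connected A) /\ left_query_alg K C F X.

End Inst.

(* Main.v *)
Require Import Defs.
From mathcomp Require Import all_boot.
From Stdlib Require Import Classical ClassicalEpsilon.
Set Implicit Arguments. Unset Strict Implicit. Unset Printing Implicit Defensive.

Lemma hom_of_nth (d e : seq nat) (g : {ffun 'I_(size d) -> 'I_(size e)}) (i : 'I_(size d)) :
  uniq d -> hom_of g (nth 0 d i) = nth 0 e (g i).
Proof.
move=> ud; rewrite /hom_of index_uniq // insubT //=.
by move=> H; congr (nth 0 e (g _)); apply: val_inj.
Qed.

Lemma hom_of_in (d e : seq nat) (g : {ffun 'I_(size d) -> 'I_(size e)}) x :
  x \in d -> hom_of g x \in e.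
Proof.
move=> xd; rewrite /hom_of insubT ?index_mem //= => H.
by apply: mem_nth.
Qed.

Lemma hom_of_inj (d e : seq nat) (g g' : {ffun 'I_(size d) -> 'I_(size e)}) :
  uniq d -> uniq e -> {in d, hom_of g =1 hom_of g'} -> g = g'.
Proof.
move=> ud ue H; apply/ffunP => i.
have := H _ (mem_nth 0 (ltn_ord i)); rewrite !hom_of_nth //.
by move/eqP; rewrite nth_uniq // => /eqP; apply: val_inj.
Qed.

Lemma hom_of_exists (d e : seq nat) (h : nat -> nat) :
  uniq d -> {in d, forall x, h x \in e} ->
  exists g : {ffun 'I_(size d) -> 'I_(size e)}, {in d, hom_of g =1 h}.
Proof.
move=> ud He.
have : forall i : 'I_(size d), exists j : 'I_(size e), nth 0 e j = h (nth 0 d i).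
  move=> i; have Hx := He _ (mem_nth 0 (ltn_ord i)).
  have Hi : index (h (nth 0 d i)) e < size e by rewrite index_mem.
  by exists (Ordinal Hi) => /=; rewrite nth_index.
case/fin_all_exists => f Hf; exists (finfun f) => x xd.
have Hi : index x d < size d by rewrite index_mem.
have -> : x = nth 0 d (Ordinal Hi) by rewrite /= nth_index.
by rewrite hom_of_nth // ffunE Hf.
Qed.

Lemma count_split (d d1 d2 e : seq nat) (P1 P2 : (nat -> nat) -> bool) :
 uniq d -> uniq d1 -> uniq d2 -> uniq e ->
 {subset d1 <= d} -> {subset d2 <= d} -> (forall x, x \in d -> (x \in d1) || (x \in d2)) ->
 (forall x, x \in d1 -> x \in d2 -> False) ->
 (forall h h', {in d1, h =1 h'} -> P1 h = P1 h') ->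
 (forall h h', {in d2, h =1 h'} -> P2 h = P2 h') ->
 #|[pred g : {ffun 'I_(size d) -> 'I_(size e)} | P1 (hom_of g) && P2 (hom_of g)]| =
 #|[pred g : {ffun 'I_(size d1) -> 'I_(size e)} | P1 (hom_of g)]| *
 #|[pred g : {ffun 'I_(size d2) -> 'I_(size e)} | P2 (hom_of g)]|.
Proof.
move=> ud ud1 ud2 ue s1 s2 s12 dis HP1 HP2.
pose phi (g : {ffun 'I_(size d) -> 'I_(size e)}) :=
  [pick p : {ffun 'I_(size d1) -> 'I_(size e)} * {ffun 'I_(size d2) -> 'I_(size e)} |
     all (fun x => hom_of p.1 x == hom_of g x) d1 && all (fun x => hom_of p.2 x == hom_of g x) d2].
have phiP : forall g, exists p, phi g = Some p /\ {in d1, hom_of p.1 =1 hom_of g} /\ {in d2, hom_of p.2 =1 hom_of g}.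
  move=> g; rewrite /phi; case: pickP => [p /andP[/allP H1 /allP H2]|H].
    by exists p; split=> //; split=> x xd; apply/eqP; [apply: H1|apply: H2].
  have [g1 Hg1] := @hom_of_exists d1 e (hom_of g) ud1 (fun x xd => hom_of_in g (s1 x xd)).
  have [g2 Hg2] := @hom_of_exists d2 e (hom_of g) ud2 (fun x xd => hom_of_in g (s2 x xd)).
  have := H (g1, g2); rewrite /=.
  have -> : all (fun x => hom_of g1 x == hom_of g x) d1 by apply/allP => x xd; rewrite Hg1.
  by have -> : all (fun x => hom_of g2 x == hom_of g x) d2 by apply/allP => x xd; rewrite Hg2.
pose SS := [set g : {ffun 'I_(size d) -> 'I_(size e)} | P1 (hom_of g) && P2 (hom_of g)].
pose T1 := [set g : {ffun 'I_(size d1) -> 'I_(size e)} | P1 (hom_of g)].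
pose T2 := [set g : {ffun 'I_(size d2) -> 'I_(size e)} | P2 (hom_of g)].
have inj : {in SS &, injective phi}.
  move=> g g' _ _ E.
  have [p [Ep [H1 H2]]] := phiP g; have [p' [Ep' [H1' H2']]] := phiP g'.
  move: E; rewrite Ep Ep' => -[E]; subst p'.
  apply: hom_of_inj => // x xd; case/orP: (s12 x xd) => xs.
    by rewrite -H1 // H1'.
  by rewrite -H2 // H2'.
have eqim : phi @: SS = Some @: setX T1 T2.
  apply/setP => o; apply/imsetP/imsetP.
    case=> g; rewrite inE => /andP[g1 g2] ->.
    have [p [Ep [H1 H2]]] := phiP g; exists p => //.
    by rewrite !inE (HP1 _ _ H1) (HP2 _ _ H2) g1 g2.
  case=> -[g1 g2]; rewrite !inE /= => /andP[Hg1 Hg2] ->.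
  pose h x := if x \in d1 then hom_of g1 x else hom_of g2 x.
  have [g Hg] : exists g : {ffun 'I_(size d) -> 'I_(size e)}, {in d, hom_of g =1 h}.
    apply: hom_of_exists => // x xd; rewrite /h.
    by case: ifP => xd1; apply: hom_of_in => //; case/orP: (s12 x xd); rewrite ?xd1.
  have A1 : {in d1, hom_of g =1 hom_of g1} by move=> x xd; rewrite Hg ?s1 // /h xd.
  have A2 : {in d2, hom_of g =1 hom_of g2}.
    move=> x xd; rewrite Hg ?s2 // /h; case: ifP => // xd1; case: (dis x xd1 xd).
  exists g; first by rewrite inE (HP1 _ _ A1) (HP2 _ _ A2) Hg1 Hg2.
  have [p [Ep [H1 H2]]] := phiP g; rewrite Ep.
  case: p H1 H2 {Ep} => p1 p2 /= H1 H2.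
  congr (Some (_, _)); apply: hom_of_inj => // x xd.
    by rewrite -A1 // H1.
  by rewrite -A2 // H2.
transitivity #|phi @: SS|; first by rewrite card_in_imset // cardsE.
by rewrite eqim card_imset; [rewrite cardsX !cardsE | move=> ? ? []].
Qed.

Lemma mem_adom (S : finType) (ar : S -> nat) (A : instance ar) x :
  x \in adom A <-> exists R t, t \in A R /\ x \in val t.
Proof.
rewrite /adom; split.
  case/flattenP => s /mapP[R _ ->] /flattenP[s' /mapP[t tA ->] xt].
  by exists R, t.
case=> R [t [tA xt]]; apply/flattenP; exists (flatten [seq val t | t <- A R]).
  by apply/mapP; exists R; rewrite ?mem_enum.
by apply/flattenP; exists (val t) => //; apply/mapP; exists t.
Qed.

Lemma is_homb_ext (S : finType) (ar : S -> nat) (A D : instance ar) h h' :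
  {in adom A, h =1 h'} -> is_homb A D h = is_homb A D h'.
Proof.
move=> E; rewrite /is_homb; apply: eq_forallb => R; apply: eq_in_all => t tA.
have -> : map_tuple h t = map_tuple h' t.
  apply: val_inj => /=; apply/eq_in_map => x xt; apply: E.
  by apply/mem_adom; exists R, t.
by [].
Qed.

Definition splitI (S : finType) (ar : S -> nat) (A : instance ar) (p : pred (seq nat)) : instance ar :=
  fun R => filter (fun t => p (val t)) (A R).

Lemma all_split (T : Type) (f p : pred T) s :
  all f s = all f (filter p s) && all f (filter (predC p) s).
Proof. by elim: s => //= x s ->; case: (p x) => /=; case: (f x); rewrite ?andbF. Qed.

Lemma is_homb_split (S : finType) (ar : S -> nat) (A D : instance ar) p h :
  is_homb A D h = is_homb (splitI A p) D h && is_homb (splitI A (predC p)) D h.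
Proof.
rewrite /is_homb; apply/forallP/andP.
  move=> H; split; apply/forallP => R; move: (H R); rewrite (all_split _ (fun t : (ar R).-tuple nat => p (val t))) => /andP[] //.
case=> /forallP H1 /forallP H2 R.
by rewrite (all_split _ (fun t : (ar R).-tuple nat => p (val t))) H1 H2.
Qed.

Lemma adom_split (S : finType) (ar : S -> nat) (A : instance ar) p x :
  x \in adom A -> (x \in adom (splitI A p)) || (x \in adom (splitI A (predC p))).
Proof.
case/mem_adom => R [t [tA xt]]; case E: (p (val t)).
  by apply/orP; left; apply/mem_adom; exists R, t; rewrite mem_filter E.
by apply/orP; right; apply/mem_adom; exists R, t; rewrite mem_filter /= E.
Qed.

Lemma adom_splitS (S : finType) (ar : S -> nat) (A : instance ar) p x :
  x \in adom (splitI A p) -> x \in adom A.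
Proof.
case/mem_adom => R [t [tA xt]]; apply/mem_adom; exists R, t.
by move: tA; rewrite mem_filter => /andP[].
Qed.

Lemma hom_count_split (S : finType) (ar : S -> nat) (A D : instance ar) p :
  (forall x, x \in adom (splitI A p) -> x \in adom (splitI A (predC p)) -> False) ->
  hom_count A D = hom_count (splitI A p) D * hom_count (splitI A (predC p)) D.
Proof.
move=> dis; rewrite /hom_count.
rewrite -(@count_split (undup (adom A)) _ _ _ (fun h => is_homb (splitI A p) D h) (fun h => is_homb (splitI A (predC p)) D h)).
- by apply: eq_card => g; rewrite !inE -is_homb_split.
- exact: undup_uniq.
- exact: undup_uniq.
- exact: undup_uniq.
- exact: undup_uniq.
- by move=> x; rewrite !mem_undup; apply: adom_splitS.
- by move=> x; rewrite !mem_undup; apply: adom_splitS.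
- by move=> x; rewrite !mem_undup; apply: adom_split.
- by move=> x; rewrite !mem_undup; apply: dis.
- by move=> h h' E; apply: is_homb_ext => x xd; apply: E; rewrite mem_undup.
- by move=> h h' E; apply: is_homb_ext => x xd; apply: E; rewrite mem_undup.
Qed.

Lemma linked_snoc (S : finType) (ar : S -> nat) (A : instance ar) a x y :
  linked A a x -> cooccur A x y -> linked A a y.
Proof.
elim=> [z|z u v H _ IH] Hc.
  by apply: (linkedS Hc); apply: linked0.
exact: (linkedS H (IH Hc)).
Qed.

Definition nfacts (S : finType) (ar : S -> nat) (A : instance ar) := \sum_(R : S) size (A R).

Lemma nfacts_split (S : finType) (ar : S -> nat) (A : instance ar) p :
  nfacts A = nfacts (splitI A p) + nfacts (splitI A (predC p)).
Proof.
rewrite /nfacts -big_split /=; apply: eq_bigr => R _.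
rewrite /splitI !size_filter -(count_predC (fun t : (ar R).-tuple nat => p (val t))).
by congr (_ + _); apply: eq_count.
Qed.

Lemma nfacts_pos (S : finType) (ar : S -> nat) (A : instance ar) R t :
  t \in A R -> 0 < nfacts A.
Proof.
move=> tA; rewrite /nfacts (bigD1 R) //=.
by case: (A R) tA.
Qed.

Definition decP (S : finType) (ar : S -> nat) (A : instance ar) :=
  exists L : seq (instance ar), (forall B, List.In B L -> connected B) /\
    forall D, hom_count A D = \prod_(B <- L) hom_count B D.

Lemma decomp_step (S : finType) (ar : S -> nat) (A : instance ar) :
  (forall B : instance ar, nfacts B < nfacts A -> decP B) -> decP A.
Proof.
move=> IH.
case: (classic (exists a b, a \in adom A /\ b \in adom A /\ ~ linked A a b)); last first.
  move=> nE; exists [:: A]; split.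
    move=> B [<-|[]] a b Ha Hb; apply: NNPP => nl; apply: nE; by exists a, b.
  by move=> D; rewrite big_seq1.
case=> a [b [Ha [Hb nl]]].
pose p := fun s : seq nat =>
  if excluded_middle_informative (exists x, x \in s /\ linked A a x) then true else false.
have pP : forall s, p s <-> exists x, x \in s /\ linked A a x.
  by move=> s; rewrite /p; case: excluded_middle_informative.
have dis : forall x, x \in adom (splitI A p) -> x \in adom (splitI A (predC p)) -> False.
  move=> x /mem_adom[R [t [tA xt]]] /mem_adom[R' [t' [tA' xt']]].
  move: tA tA'; rewrite !mem_filter /= => /andP[pt tA] /andP[npt tA'].
  have [y [yt ly]] : exists y, y \in val t /\ linked A a y by apply/pP.
  have lx : linked A a x by apply: (linked_snoc ly); exists R, t.
  by move: npt; have -> : p (val t') by apply/pP; exists x.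
have [R [t [tA at_]]] := (mem_adom _ _).1 Ha.
have [R' [t' [tA' bt']]] := (mem_adom _ _).1 Hb.
have pt : p (val t) by apply/pP; exists a; split => //; apply: linked0.
have npt' : ~~ p (val t').
  apply/negP => /pP[y [yt ly]]; apply: nl; apply: (linked_snoc ly); exists R', t'.
  by [].
have pos1 : 0 < nfacts (splitI A p) by apply: (nfacts_pos (R := R) (t := t)); rewrite mem_filter pt.
have pos2 : 0 < nfacts (splitI A (predC p)) by apply: (nfacts_pos (R := R') (t := t')); rewrite mem_filter /= npt'.
have := nfacts_split A p => E.
have [L1 [C1 H1]] : decP (splitI A p) by apply: IH; rewrite E -addn1 leq_add2l.
have [L2 [C2 H2]] : decP (splitI A (predC p)) by apply: IH; rewrite E -add1n leq_add2r.
exists (L1 ++ L2); split.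
  by move=> B HB; case: (List.in_app_or _ _ _ HB); [apply: C1|apply: C2].
by move=> D; rewrite big_cat /= -H1 -H2 (hom_count_split D dis).
Qed.

Lemma decomp (S : finType) (ar : S -> nat) (A : instance ar) : decP A.
Proof.
suff H : forall n (A : instance ar), nfacts A <= n -> decP A by apply: (H (nfacts A)).
elim=> [|n IH] {}A Hn; apply: decomp_step => B HB.
  by move: (leq_trans HB Hn).
by apply: IH; rewrite -ltnS (leq_trans HB Hn).
Qed.

Definition dec (S : finType) (ar : S -> nat) (A : instance ar) : seq (instance ar) :=
  proj1_sig (constructive_indefinite_description _ (decomp A)).

Lemma decP_dec (S : finType) (ar : S -> nat) (A : instance ar) :
  (forall B, List.In B (dec A) -> connected B) /\
    forall D, hom_count A D = \prod_(B <- dec A) hom_count B D.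
Proof. rewrite /dec; case: constructive_indefinite_description => L //. Qed.

Definition combine (K : semiring) (l : seq nat) : nat :=
  match K with SN => \prod_(n <- l) n | SB => all (fun n => 0 < n) l end.

Fixpoint recon (S : finType) (ar : S -> nat) K (F : seq (instance ar)) (v : seq nat) : seq nat :=
  match F with
  | [::] => [::]
  | A :: F' => combine K (take (size (dec A)) v) :: recon K F' (drop (size (dec A)) v)
  end.

Lemma combine_ok (S : finType) (ar : S -> nat) K (A D : instance ar) :
  combine K [seq homK K B D | B <- dec A] = homK K A D.
Proof.
have [_ H] := decP_dec A; rewrite /homK H.
case: K => /=; last by rewrite big_map.
congr nat_of_bool; elim: (dec A) => [|B L IH]; first by rewrite big_nil.
by rewrite big_cons /= muln_gt0 IH; case: (0 < hom_count B D).
Qed.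

Lemma recon_ok (S : finType) (ar : S -> nat) K (F : seq (instance ar)) D :
  recon K F [seq homK K B D | B <- flatten (map (@dec S ar) F)] = [seq homK K A D | A <- F].
Proof.
elim: F => [|A F IH] //=.
rewrite map_cat.
have sz : size (dec A) = size [seq homK K B D | B <- dec A] by rewrite size_map.
by rewrite sz take_size_cat // drop_size_cat // IH combine_ok.
Qed.

Lemma In_cat (T : Type) (x : T) (s1 s2 : seq T) : List.In x (s1 ++ s2) -> List.In x s1 \/ List.In x s2.
Proof. elim: s1 => [|y s IH] /=; [by right | case=> [->|/IH[]]]; auto. Qed.

Lemma In_flatten (S : finType) (ar : S -> nat) (F : seq (instance ar)) B :
  List.In B (flatten (map (@dec S ar) F)) -> exists A, List.In B (dec A).
Proof.
elim: F => [|A F IH] //= H; case: (In_cat H) => H1; first by exists A.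
exact: IH.
Qed.

Theorem mainTheorem1 (S : finType) (ar : S -> nat)
  (ar_pos : forall R : S, 0 < ar R)
  (C : instance ar -> Prop) (HC : iso_closed C) (K : semiring) :
  admits_left K C <-> admits_left_connected K C.
Proof.
split; last first.
  by case=> F [X [sz [_ alg]]]; exists F, X.
case=> F [X [sz alg]].
pose E : instance ar := fun R => [::].
exists (E :: flatten (map (@dec S ar) F)), (fun v => X (recon K F (behead v))).
split; first by [].
split.
  move=> B /= [<-|HB]; last by have [A HA] := In_flatten HB; apply: (decP_dec A).1.
  by move=> a b /mem_adom[R [t []]].
by move=> D; rewrite alg /= recon_ok.
Qed.
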